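(* Let $(R,\mathfrak m)$ be a one-dimensional Cohen–Macaulay local ring. Let $I,J$ be regular trace ideals of $R$ with $J\subseteq I$ and $\ell_R(I/J)=2$. Assume that $I:I$ is a local ring and that there exists $q\in I\setminus J$ with $IJ=qJ$ and $I^2\ne qI$. Then the maximal ideal of $I:I$ is $q^{-1}J$.
   Context: $Q(R)$ is the total ring of fractions, $I:I=\{x\in Q(R)\mid xI\subseteq I\}$, and $\ell_R$ denotes length. An ideal is regular if it contains a non-zerodivisor; a trace ideal is an ideal of the form $\sum_{f\in\mathrm{Hom}_R(M,R)}\mathrm{Im}f$ for some $R$-module $M$. *)

(* Defs.v *)
From HB Require Import structures.
From mathcomp Require Import all_boot all_order all_algebra.
Set Implicit Arguments. Unset Strict Implicit. Unset Printing Implicit Defensive.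
Import Order.TTheory GRing.Theory Num.Theory.
Local Open Scope ring_scope.

Section CommAlg.
Variable R : comNzRingType.

Definition same_set (P Q : R -> Prop) := forall x, P x <-> Q x.
Definition incl (P Q : R -> Prop) := forall x, P x -> Q x.

Definition is_ideal (I : R -> Prop) :=
  [/\ I 0, (forall x y, I x -> I y -> I (x + y)) & (forall r x, I x -> I (r * x))].

Definition proper_ideal (I : R -> Prop) := is_ideal I /\ ~ I 1.

Definition prime_ideal (P : R -> Prop) :=
  proper_ideal P /\ (forall x y, P (x * y) -> P x \/ P y).

Definition maximal_ideal (M : R -> Prop) :=
  proper_ideal M /\
  (forall N, is_ideal N -> incl M N -> same_set N M \/ N 1).

Definition local_ring (m : R -> Prop) :=
  maximal_ideal m /\ (forall N, maximal_ideal N -> same_set N m).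

Definition noetherian :=
  forall I : nat -> R -> Prop, (forall n, is_ideal (I n)) ->
    (forall n, incl (I n) (I n.+1)) ->
    exists N, forall n, (N <= n)%N -> incl (I n) (I N).

Definition strict_subset (P Q : R -> Prop) := incl P Q /\ ~ incl Q P.

Definition prime_chain (n : nat) :=
  exists P : nat -> R -> Prop, (forall i, prime_ideal (P i)) /\
    (forall i, (i < n)%N -> strict_subset (P i) (P i.+1)).

Definition krull_dim_eq (n : nat) := prime_chain n /\ ~ prime_chain n.+1.

Definition nzd (s : R) := forall x, s * x = 0 -> x = 0.

Definition gen_by (xs : seq R) (i : nat) (y : R) :=
  exists c : nat -> R, y = \sum_(k < i) c k * xs`_k.

Definition regular_seq (m : R -> Prop) (xs : seq R) :=
  (forall x, x \in xs -> m x) /\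
  ~ gen_by xs (size xs) 1 /\
  (forall i, (i < size xs)%N ->
     forall y, gen_by xs i (xs`_i * y) -> gen_by xs i y).

(* Cohen-Macaulay local ring: depth (length of a maximal regular sequence
   in m) equals the Krull dimension; since depth <= dim always, this is
   the existence of a regular sequence of length dim R in m. *)
Definition cohen_macaulay_local (m : R -> Prop) (d : nat) :=
  [/\ noetherian, local_ring m, krull_dim_eq d &
      exists xs, size xs = d /\ regular_seq m xs].

Definition regular_ideal (I : R -> Prop) := exists s, I s /\ nzd s.

(* trace ideal: I = sum_{f in Hom_R(M,R)} Im f for some R-module M *)
Definition trace_ideal (I : R -> Prop) :=
  exists M : lmodType R, forall x, I x <->
    exists n (f : 'I_n -> {linear M -> R^o}) (v : 'I_n -> M),
      x = \sum_(k < n) (f k (v k) : R).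

(* length of the R-module I/J equals n: a composition series
   J = K_0 < K_1 < ... < K_n = I of ideals with simple factors *)
Definition length_quot_eq (I J : R -> Prop) (n : nat) :=
  exists K : nat -> R -> Prop,
    [/\ same_set (K 0%N) J, same_set (K n) I,
        forall i, is_ideal (K i) &
        forall i, (i < n)%N -> strict_subset (K i) (K i.+1) /\
          forall L, is_ideal L -> incl (K i) L -> incl L (K i.+1) ->
            same_set L (K i) \/ same_set L (K i.+1)].

Definition ideal_mul (I J : R -> Prop) (x : R) :=
  exists n (a b : 'I_n -> R), (forall k, I (a k)) /\ (forall k, J (b k)) /\
    x = \sum_(k < n) a k * b k.
Definition scale_set (q : R) (I : R -> Prop) (x : R) := exists i, I i /\ x = q * i.

(* ---- Total ring of fractions Q(R) ----
   An element of Q(R) is a fraction a/s with s a non-zerodivisor;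
   a/s = b/t iff a*t = b*s.  Subsets of Q(R) are predicates
   F : R -> R -> Prop on pairs (numerator, denominator), required to be
   invariant under this equality. *)
Definition frac_eq (a s b t : R) := a * t = b * s.

Definition frac_set (F : R -> R -> Prop) :=
  forall a s b t, nzd s -> nzd t -> frac_eq a s b t -> F a s -> F b t.

(* I:I = { x in Q(R) | x I ⊆ I } *)
Definition colon_self (I : R -> Prop) (a s : R) :=
  nzd s /\ forall i, I i -> exists i', I i' /\ a * i = s * i'.

Definition colon_ideal (I : R -> Prop) (F : R -> R -> Prop) :=
  [/\ frac_set F,
      (forall a s, F a s -> colon_self I a s),
      F 0 1,
      (forall a s b t, F a s -> F b t -> F (a * t + b * s) (s * t)) &
      (forall a s b t, colon_self I a s -> F b t -> F (a * b) (s * t))].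

Definition colon_proper_ideal (I : R -> Prop) (F : R -> R -> Prop) :=
  colon_ideal I F /\ ~ F 1 1.

Definition colon_same (F G : R -> R -> Prop) :=
  forall a s, nzd s -> (F a s <-> G a s).
Definition colon_sub (F G : R -> R -> Prop) :=
  forall a s, F a s -> G a s.

Definition colon_maximal_ideal (I : R -> Prop) (F : R -> R -> Prop) :=
  colon_proper_ideal I F /\
  (forall G, colon_ideal I G -> colon_sub F G -> colon_same G F \/ G 1 1).

Definition colon_local (I : R -> Prop) :=
  exists F, colon_maximal_ideal I F /\
    forall G, colon_maximal_ideal I G -> colon_same G F.

Definition inv_scale (q : R) (J : R -> Prop) (a s : R) :=
  exists j, J j /\ frac_eq a s j q.

End CommAlg.

(* Main.v *)
Require Import Defs.
From HB Require Import structures.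
From mathcomp Require Import all_boot all_order all_algebra.
From mathcomp Require Import ring.
From Stdlib Require Import ClassicalEpsilon Classical.
Import GRing.Theory.
Set Implicit Arguments. Unset Strict Implicit.
Local Open Scope ring_scope.

Definition mkLin (R : comNzRingType) (M : lmodType R) (g : M -> R^o) (H : linear g) : {linear M -> R^o} :=
  HB.pack g (GRing.isLinear.Build R M R^o *:%R g H).

Lemma mkLinE (R : comNzRingType) (M : lmodType R) (g : M -> R^o) (H : linear g) v : mkLin H v = g v.
Proof. by []. Qed.

Section Helpers.
Variable R : comNzRingType.
Implicit Types (I J L LB A B : R -> Prop).

Lemma cancel_nzd (s x y : R) : nzd s -> s * x = s * y -> x = y.
Proof.
move=> H E; apply/eqP; rewrite -subr_eq0; apply/eqP/H.
by rewrite mulrBr E subrr.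
Qed.

Lemma nzd1 : nzd (1:R). Proof. by move=> x; rewrite mul1r. Qed.

Lemma nzdM (s t : R) : nzd s -> nzd t -> nzd (s*t).
Proof. by move=> Hs Ht x; rewrite -mulrA => /Hs /Ht. Qed.

Lemma ideal0 I : is_ideal I -> I 0. Proof. by case. Qed.
Lemma idealD I x y : is_ideal I -> I x -> I y -> I (x+y).
Proof. by case=> _ H _; apply: H. Qed.
Lemma idealM I r x : is_ideal I -> I x -> I (r*x).
Proof. by case=> _ _ H; apply: H. Qed.
Lemma idealB I x y : is_ideal I -> I x -> I y -> I (x-y).
Proof. by move=> iI Hx Hy; apply: idealD => //; rewrite -mulN1r; apply: idealM. Qed.

Lemma mul_in I J x y : I x -> J y -> ideal_mul I J (x * y).
Proof.
move=> Hx Hy; exists 1%N, (fun _ => x), (fun _ => y); split=> //; split=> //.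
by rewrite big_ord1.
Qed.

Lemma ideal_sum A B : is_ideal A -> is_ideal B ->
  is_ideal (fun x => exists y z, A y /\ B z /\ x = y + z).
Proof.
move=> iA iB; split.
- by exists 0, 0; rewrite addr0; split; [apply: ideal0|split; [apply: ideal0|]].
- move=> x y [y1 [z1 [A1 [B1 ->]]]] [y2 [z2 [A2 [B2 ->]]]].
  exists (y1 + y2), (z1 + z2); split; [exact: idealD|split; [exact: idealD|]].
  by rewrite addrACA.
- move=> r x [y1 [z1 [A1 [B1 ->]]]]; exists (r * y1), (r * z1).
  split; [exact: idealM|split; [exact: idealM|]]; by rewrite mulrDr.
Qed.

Lemma ideal_cap A B : is_ideal A -> is_ideal B -> is_ideal (fun x => A x /\ B x).
Proof.
move=> iA iB; split.
- by split; apply: ideal0.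
- by move=> x y [? ?] [? ?]; split; apply: idealD.
- by move=> r x [? ?]; split; apply: idealM.
Qed.

Lemma len2 I J L LB : length_quot_eq I J 2 -> is_ideal L -> is_ideal LB ->
  incl J L -> incl L LB -> incl LB I -> (exists x, LB x /\ ~ L x) -> ~ incl I LB ->
  incl L J.
Proof.
move=> [K [K0 K2 Kid Ks]] idL idLB JL LLB LBI [x0 [x0B x0L]] nIB.
have [[K01 _] S0] := Ks 0%N isT.
have [[K12 _] S1] := Ks 1%N isT.
have K0J y : K 0%N y -> J y by move/(K0 y).
have JK0 y : J y -> K 0%N y by move/(K0 y).
have K2I y : K 2%N y -> I y by move/(K2 y).
have IK2 y : I y -> K 2%N y by move/(K2 y).
pose P := fun x => exists y z, LB y /\ K 1%N z /\ x = y + z.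
have idP : is_ideal P by apply: ideal_sum.
have K1P : incl (K 1%N) P.
  by move=> z Kz; exists 0, z; split; [apply: ideal0|split=> //; rewrite add0r].
have PK2 : incl P (K 2%N).
  move=> x [y [z [Hy [Hz ->]]]]; apply: idealD => //; [exact: IK2 (LBI _ Hy)|exact: K12].
case: (S1 P idP K1P PK2) => [PK1|PK2'].
- have LBK1 : incl LB (K 1%N).
    by move=> y Hy; apply/(PK1 y); exists y, 0; split=> //; split; [apply: ideal0|rewrite addr0].
  have K0LB : incl (K 0%N) LB by move=> y /K0J /JL /LLB.
  case: (S0 LB idLB K0LB LBK1) => h.
  + by exfalso; apply: x0L; apply/JL/K0J/(h x0).
  + have K0L : incl (K 0%N) L by move=> y /K0J /JL.
    have LK1 : incl L (K 1%N) by move=> y /LLB /LBK1.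
    case: (S0 L idL K0L LK1) => h'.
    * by move=> y /(h' y) /K0J.
    * by exfalso; apply: x0L; apply/(h' x0)/(h x0).
- pose Q := fun x => LB x /\ K 1%N x.
  have idQ : is_ideal Q by apply: ideal_cap.
  have K0Q : incl (K 0%N) Q by move=> y Hy; split; [apply/LLB/JL/K0J|apply: K01].
  have QK1 : incl Q (K 1%N) by move=> y [].
  case: (S0 Q idQ K0Q QK1) => hQ.
  + pose P' := fun x => exists y z, L y /\ K 1%N z /\ x = y + z.
    have idP' : is_ideal P' by apply: ideal_sum.
    have K1P' : incl (K 1%N) P'.
      by move=> z Kz; exists 0, z; split; [apply: ideal0|split=> //; rewrite add0r].
    have P'K2 : incl P' (K 2%N).
      move=> x [y [z [Hy [Hz ->]]]]; apply: idealD => //; [exact: IK2 (LBI _ (LLB _ Hy))|exact: K12].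
    case: (S1 P' idP' K1P' P'K2) => h.
    * move=> y Ly; apply: K0J; apply/(hQ y); split; first exact: LLB.
      by apply/(h y); exists y, 0; split=> //; split; [apply: ideal0|rewrite addr0].
    * exfalso; apply: x0L.
      have /(h x0) [l [k [Ll [Kk E]]]] := IK2 _ (LBI _ x0B).
      have Qk : Q k.
        split=> //; have -> : k = x0 - l by rewrite E addrC addKr.
        apply: idealB => //; exact: LLB.
      by rewrite E; apply: idealD => //; apply/JL/K0J/(hQ k).
  + exfalso; apply: nIB => y /IK2 /(PK2' y) [a [b [Ha [Hb ->]]]].
    apply: idealD => //; exact: (proj1 ((hQ b).2 Hb)).
Qed.

Lemma trace_stable I J (a s j : R) : trace_ideal J -> incl J I -> colon_self I a s -> J j ->
  exists j', J j' /\ a * j = s * j'.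
Proof.
move=> [M HM] JI [ns Hs] /HM [n [f [v ->]]].
have H k u : exists r, a * f k u = s * r.
  have : J (f k u).
    by apply/HM; exists 1%N, (fun _ => f k), (fun _ => u); rewrite big_ord1.
  by move=> /JI /Hs [i' [_ E]]; exists i'.
pose g k u := proj1_sig (constructive_indefinite_description _ (H k u)).
have gE k u : a * f k u = s * g k u := proj2_sig (constructive_indefinite_description _ (H k u)).
have lin k : linear (g k : M -> R^o).
  move=> c u w; apply: (cancel_nzd ns).
  rewrite -gE linearP.
  change (a * (c * f k u + f k w) = s * (c * g k u + g k w)).
  rewrite !mulrDr [a * (c * _)]mulrCA.
  rewrite !gE. by rewrite mulrCA.
exists (\sum_(k < n) mkLin (lin k) (v k)); split.
  by apply/HM; exists n, (fun k => mkLin (lin k)), v.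
rewrite mulr_sumr mulr_sumr; apply: eq_bigr => k _; exact: gE.
Qed.

End Helpers.

Theorem lemma2p7 (R : comNzRingType) (m : R -> Prop) (I J : R -> Prop) (q : R) :
  cohen_macaulay_local m 1 ->
  is_ideal I -> is_ideal J ->
  regular_ideal I -> regular_ideal J ->
  trace_ideal I -> trace_ideal J ->
  incl J I ->
  length_quot_eq I J 2 ->
  colon_local I ->
  I q -> ~ J q ->
  same_set (ideal_mul I J) (scale_set q J) ->
  ~ same_set (ideal_mul I I) (scale_set q I) ->
  nzd q /\
  forall M : R -> R -> Prop, colon_maximal_ideal I M ->
    colon_same M (inv_scale q J).
Proof.
move=> _ idI idJ _ [s0 [Js0 ns0]] _ trJ JI len [F [FM Funi]] Iq nJq IJ nII.
have mulIJ i j : I i -> J j -> exists j', J j' /\ i * j = q * j'.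
  by move=> Hi Hj; have /IJ [j' [Hj' E]] := mul_in Hi Hj; exists j'.
have nq : nzd q.
  move=> x qx; have [j [_ E]] := mulIJ s0 s0 (JI _ Js0) Js0.
  apply: (ns0); apply: (ns0).
  by rewrite mulrA E mulrAC qx mul0r.
split=> // M MM.
pose N' := fun a s => nzd s /\ inv_scale q J a s.
have colr r : colon_self I r 1.
  split; first exact: nzd1.
  by move=> i Ii; exists (r * i); split; [apply: idealM|rewrite mul1r].
have HN' : colon_maximal_ideal I N'.
  split; first split; first split.
  - move=> a s b t ns nt E [_ [j [Jj Ej]]]; split=> //; exists j; split=> //.
    rewrite /frac_eq in E Ej *; apply: (cancel_nzd ns).
    transitivity ((a * t) * q); first by rewrite E; ring.
    by rewrite mulrAC Ej; ring.
  - move=> a s [ns [j [Jj Ej]]]; split=> // i Ii.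
    have [j' [Jj' E']] := mulIJ i j Ii Jj.
    exists j'; split; first exact: JI.
    apply: (cancel_nzd nq).
    rewrite /frac_eq in Ej.
    transitivity ((a * q) * i); first by ring.
    rewrite Ej; transitivity (s * (i * j)); first by ring.
    by rewrite E'; ring.
  - split; first exact: nzd1.
    by exists 0; split; [apply: ideal0|rewrite /frac_eq !mul0r].
  - move=> a s b t [ns [j1 [J1 E1]]] [nt [j2 [J2 E2]]].
    split; first exact: nzdM.
    exists (j1 + j2); split; first exact: idealD.
    rewrite /frac_eq in E1 E2 *.
    transitivity ((a * q) * t + (b * q) * s); first by ring.
    by rewrite E1 E2; ring.
  - move=> a s b t Hc [nt [j [Jj Ej]]].
    have [j' [Jj' E']] := trace_stable trJ JI Hc Jj.
    split; first exact: (nzdM Hc.1 nt).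
    exists j'; split=> //; rewrite /frac_eq in Ej *.
    transitivity (a * (b * q)); first by ring.
    rewrite Ej; transitivity ((a * j) * t); first by ring.
    by rewrite E'; ring.
  - move=> [_ [j [Jj E]]]; apply: nJq.
    by rewrite /frac_eq mul1r mulr1 in E; rewrite E.
  move=> G [Gf Gc G01 Gadd Gmul] sub.
  case: (classic (G 1 1)) => [h|nG]; [by right|left].
  pose L := fun x => G x q.
  pose LB := fun x => I x /\ colon_self I x q.
  have idL : is_ideal L.
    split.
    - by apply: (Gf 0 1) => //; [exact: nzd1|rewrite /frac_eq !mul0r].
    - move=> x y Gx Gy; have := Gadd _ _ _ _ Gx Gy; apply: Gf; [exact: nzdM|done|].
      by rewrite /frac_eq; ring.
    - move=> r x Gx; have := Gmul _ _ _ _ (colr r) Gx; apply: Gf; [by rewrite mul1r|done|].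
      by rewrite /frac_eq mul1r.
  have idLB : is_ideal LB.
    split.
    - split; first exact: ideal0.
      by split=> // i _; exists 0; split; [apply: ideal0|rewrite mul0r mulr0].
    - move=> x1 y1 [Ix [_ Hx]] [Iy [_ Hy]]; split; first exact: idealD.
      split=> // i Ii; have [i1 [I1 E1]] := Hx i Ii; have [i2 [I2 E2]] := Hy i Ii.
      by exists (i1 + i2); split; [apply: idealD|rewrite mulrDl mulrDr E1 E2].
    - move=> r x [Ix [_ Hx]]; split; first exact: idealM.
      split=> // i Ii; have [i1 [I1 E1]] := Hx i Ii.
      by exists (r * i1); split; [apply: idealM|rewrite -mulrA E1 mulrCA].
  have JL : incl J L.
    move=> j Jj; apply: sub; split=> //; exists j; split=> //.
  have LLB : incl L LB.
    move=> x Gx; have Hc := Gc _ _ Gx; split=> //.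
    have [_ H] := Hc; have [i' [Ii E]] := H q Iq.
    have -> : x = i' by apply: (cancel_nzd nq); rewrite mulrC.
    done.
  have LBI : incl LB I by move=> x [].
  have wit : exists x, LB x /\ ~ L x.
    exists q; split.
    - by split=> //; split=> // i Ii; exists i.
    - move=> Gq; apply: nG; apply: (Gf q q) => //; [exact: nzd1|by rewrite /frac_eq mulr1 mul1r].
  have nIB : ~ incl I LB.
    move=> h; apply: nII => x; split.
    - move=> [n [a [b [Ha [Hb ->]]]]].
      elim/big_ind: _.
      + by exists 0; split; [apply: ideal0|rewrite mulr0].
      + move=> x1 x2 [i1 [I1 ->]] [i2 [I2 ->]].
        by exists (i1 + i2); split; [apply: idealD|rewrite mulrDr].
      + move=> k _; have [_ [_ H]] := h _ (Ha k); have [i' [Ii E]] := H _ (Hb k).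
        by exists i'.
    - by move=> [i [Ii ->]]; apply: mul_in.
  have LJ := len2 len idL idLB JL LLB LBI wit nIB.
  move=> a s ns; split; last exact: sub.
  move=> Gas; have [_ H] := Gc _ _ Gas; have [i' [Ii E]] := H q Iq.
  split=> //; exists i'; split; last by rewrite /frac_eq E mulrC.
  apply: LJ; apply: (Gf a s i' q ns nq) => //.
  by rewrite /frac_eq E mulrC.
have h1 := Funi M MM; have h2 := Funi N' HN'.
move=> a s ns; split.
- by move=> /(h1 a s ns) /(h2 a s ns) [].
- by move=> Hi; apply/(h1 a s ns)/(h2 a s ns).
Qed.
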